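(* Let $F$ be a smooth regular distribution with PDF $f$ and $\ell$ an integer. For any two points $x<x'$ with $2^{-\ell}\le1-F(x')<1-F(x)\le2^{-\ell+1}$ it holds that $f(x')>2^{-33}f(x)$.
   Context: A distribution is smooth if it has no point masses and its PDF $f$ is $C^1$. A smooth distribution is regular iff $f'(v)(1-F(v))\ge-2f(v)^2$ for all $v$. *)

(* Defs.v *)
From Stdlib Require Import Reals.
From Coquelicot Require Import Coquelicot.
Open Scope R_scope.

(* F is the CDF of a distribution on R with probability density function f:
   f >= 0, F x = \int_{-oo}^x f, and \int_{-oo}^{+oo} f = 1.
   Having a density, such a distribution has no point masses (F is continuous). *)
Definition is_pdf_of (F f : R -> R) : Prop :=
  (forall x, 0 <= f x) /\
  (forall x, is_RInt_gen f (Rbar_locally m_infty) (at_point x) (F x)) /\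
  is_RInt_gen f (Rbar_locally m_infty) (Rbar_locally p_infty) 1.

Definition C1 (f : R -> R) : Prop :=
  forall x, ex_derive f x /\ continuous (Derive f) x.

Definition smooth_dist (F f : R -> R) : Prop :=
  is_pdf_of F f /\ C1 f.

Definition regular_dist (F f : R -> R) : Prop :=
  smooth_dist F f /\
  forall v, Derive f v * (1 - F v) >= - 2 * (f v) ^ 2.

(* Main.v *)
Require Import Defs.
From Stdlib Require Import Reals ZArith Lra Psatz.
From Coquelicot Require Import Coquelicot.
Open Scope R_scope.

Lemma F_diff (F f : R -> R) : is_pdf_of F f -> Defs.C1 f ->
  forall a b, is_RInt f a b (F b - F a).
Proof.
  intros [Hpos [Hint _]] HC a b.
  assert (Hc : forall z, continuous f z) by (intro z; exact (ex_derive_continuous f z (proj1 (HC z)))).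
  assert (HI : is_RInt f a b (RInt f a b)).
  { apply (RInt_correct (V:=R_CompleteNormedModule)), (ex_RInt_continuous (V:=R_CompleteNormedModule)); intros; apply Hc. }
  assert (H2 : is_RInt_gen f (Rbar_locally m_infty) (at_point b) (plus (F a) (RInt f a b))).
  { apply (is_RInt_gen_Chasles (V:=R_NormedModule)) with (b := a). apply Hint. apply is_RInt_gen_at_point, HI. }
  apply (is_RInt_gen_unique (V:=R_CompleteNormedModule)) in H2. pose proof (is_RInt_gen_unique (V:=R_CompleteNormedModule) _ _ (Hint b)) as H3.
  rewrite H2 in H3. change (plus (F a) (RInt f a b)) with (F a + RInt f a b) in H3.
  replace (F b - F a) with (RInt f a b) by lra. exact HI.
Qed.

Lemma F_deriv (F f : R -> R) : is_pdf_of F f -> Defs.C1 f ->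
  forall v, is_derive (fun t => 1 - F t) v (- f v).
Proof.
  intros Hp HC v.
  assert (H : is_derive (fun t => F t - F 0) v (f v)).
  { apply is_derive_RInt with (a := 0).
    apply filter_forall; intro; apply F_diff; auto.
    exact (ex_derive_continuous f v (proj1 (HC v))). }
  assert (H2 := is_derive_minus (fun _ => 1 - F 0) (fun t => F t - F 0) v zero (f v)
     (is_derive_const _ _) H).
  replace (- f v) with (minus zero (f v)).
  2:{ unfold minus, plus, opp, zero; simpl; ring. }
  eapply is_derive_ext; [|exact H2]. intro t; simpl. unfold minus, plus, opp; simpl. ring.
Qed.

Lemma h_deriv (F f : R -> R) : regular_dist F f -> forall t, 0 < 1 - F t ->
  is_derive (fun s => f s / ((1 - F s) * (1 - F s))) t
   ((Derive f t * ((1 - F t) * (1 - F t)) - f t * ((- f t) * (1 - F t) + (1 - F t) * (- f t)))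
     / ((1 - F t) * (1 - F t)) ^ 2).
Proof.
  intros [[Hp HC] Hreg] t Ht.
  apply (is_derive_div f (fun s => (1 - F s) * (1 - F s))).
  - apply (Derive_correct f t), HC.
  - exact (is_derive_mult (K:=R_AbsRing) (fun s => 1 - F s) (fun s => 1 - F s) t _ _
      (F_deriv F f Hp HC t) (F_deriv F f Hp HC t) Rmult_comm).
  - apply Rgt_not_eq. apply Rmult_lt_0_compat; lra.
Qed.

Lemma h_mono (F f : R -> R) : regular_dist F f -> forall y z, y <= z ->
  (forall t, y <= t <= z -> 0 < 1 - F t) ->
  f y / ((1 - F y) * (1 - F y)) <= f z / ((1 - F z) * (1 - F z)).
Proof.
  intros Hr y z Hyz Hpos.
  set (h := fun s => f s / ((1 - F s) * (1 - F s))).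
  change (h y <= h z).
  set (dh := fun t => (Derive f t * ((1 - F t) * (1 - F t)) - f t * ((- f t) * (1 - F t) + (1 - F t) * (- f t)))
     / ((1 - F t) * (1 - F t)) ^ 2).
  assert (D1 : forall t, Rmin y z < t < Rmax y z -> is_derive h t (dh t)).
  { intros t Ht. rewrite Rmin_left in Ht by lra. rewrite Rmax_right in Ht by lra.
    apply h_deriv; [exact Hr | apply Hpos; lra]. }
  assert (D2 : forall t, Rmin y z <= t <= Rmax y z -> continuity_pt h t).
  { intros t Ht. rewrite Rmin_left in Ht by lra. rewrite Rmax_right in Ht by lra.
    apply continuity_pt_filterlim.
    apply (ex_derive_continuous (K:=R_AbsRing) (V:=R_NormedModule) h).
    exists (dh t). apply h_deriv; [exact Hr | apply Hpos; lra]. }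
  destruct (MVT_gen h y z dh D1 D2) as [c [Hc Heq]].
  rewrite Rmin_left in Hc by lra. rewrite Rmax_right in Hc by lra.
  assert (Gc : 0 < 1 - F c) by (apply Hpos; lra).
  destruct Hr as [_ Hreg]. specialize (Hreg c).
  assert (0 <= dh c).
  { unfold dh, Rdiv. apply Rmult_le_pos.
    - replace (Derive f c * ((1 - F c) * (1 - F c)) - f c * ((- f c) * (1 - F c) + (1 - F c) * (- f c)))
          with ((1 - F c) * (Derive f c * (1 - F c) + 2 * f c ^ 2)) by ring.
      apply Rmult_le_pos; lra.
    - apply Rlt_le, Rinv_0_lt_compat. apply pow_lt, Rmult_lt_0_compat; lra. }
  nra.
Qed.

Theorem corollary2 (F f : R -> R) (l : Z) (x x' : R) :
  regular_dist F f ->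
  x < x' ->
  powerRZ 2 (- l) <= 1 - F x' ->
  1 - F x' < 1 - F x ->
  1 - F x <= powerRZ 2 (- l + 1) ->
  f x' > powerRZ 2 (-33) * f x.
Proof.
  intros Hr Hxx' H1 H2 H3.
  assert (Hr' := Hr). destruct Hr' as [[Hp HC] Hreg].
  assert (Hfpos : forall t, 0 <= f t) by apply Hp.
  set (p := powerRZ 2 (- l)).
  assert (Pp : 0 < p) by (apply powerRZ_lt; lra).
  assert (E : powerRZ 2 (- l + 1) = 2 * p).
  { rewrite powerRZ_add by lra. unfold p. simpl. ring. }
  rewrite E in H3. fold p in H1.
  assert (Fmono : forall a b, a <= b -> F a <= F b).
  { intros a b Hab. pose proof (F_diff F f Hp HC a b) as HI.
    apply (is_RInt_unique (V:=R_CompleteNormedModule)) in HI.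
    assert (0 <= RInt f a b).
    { apply RInt_ge_0; [exact Hab | eexists; apply (F_diff F f Hp HC) | intros; apply Hfpos]. }
    lra. }
  assert (Gpos : forall t, t <= x' -> 0 < 1 - F t).
  { intros t Ht. pose proof (Fmono t x' Ht). lra. }
  assert (Mono : forall y z, x <= y -> y <= z -> z <= x' ->
     f y / ((1 - F y) * (1 - F y)) <= f z / ((1 - F z) * (1 - F z))).
  { intros y z Hy Hyz Hz. apply h_mono; auto. intros; apply Gpos; lra. }
  assert (Gx := Gpos x ltac:(lra)). assert (Gx' := Gpos x' ltac:(lra)).
  assert (P33 : powerRZ 2 (-33) < / 4).
  { simpl. replace (2 ^ Pos.to_nat 33) with 8589934592 by (simpl; ring).
    apply Rinv_lt_contravar; lra. }
  assert (P33p : 0 < powerRZ 2 (-33)) by (apply powerRZ_lt; lra).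
  set (a := f x / ((1 - F x) * (1 - F x))).
  set (b := f x' / ((1 - F x') * (1 - F x'))).
  assert (Hab : a <= b) by (apply Mono; lra).
  assert (Ea : f x = a * ((1 - F x) * (1 - F x))) by (unfold a; field; lra).
  assert (Eb : f x' = b * ((1 - F x') * (1 - F x'))) by (unfold b; field; lra).
  assert (Ha : 0 <= a).
  { unfold a, Rdiv. apply Rmult_le_pos; auto. apply Rlt_le, Rinv_0_lt_compat, Rmult_lt_0_compat; lra. }
  assert (Q : f x' >= f x / 4).
  { rewrite Ea, Eb.
    assert (K : (1 - F x) * (1 - F x) <= 4 * ((1 - F x') * (1 - F x'))) by nra.
    assert (K2 : a * ((1 - F x) * (1 - F x)) <= a * (4 * ((1 - F x') * (1 - F x'))))
      by (apply Rmult_le_compat_l; auto).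
    assert (K3 : a * ((1 - F x') * (1 - F x')) <= b * ((1 - F x') * (1 - F x')))
      by (apply Rmult_le_compat_r; nra).
    lra. }
  destruct (Rle_lt_or_eq_dec 0 (f x) (Hfpos x)) as [Hpx | Hzx].
  - nra.
  - rewrite <- Hzx. rewrite Rmult_0_r.
    destruct (Rle_lt_or_eq_dec 0 (f x') (Hfpos x')) as [Hpx' | Hzx']; [lra|].
    exfalso.
    assert (Z : forall t, x <= t <= x' -> f t = 0).
    { intros t Ht. assert (Mt := Mono t x' ltac:(lra) ltac:(lra) ltac:(lra)).
      rewrite <- Hzx' in Mt. unfold Rdiv in Mt. rewrite Rmult_0_l in Mt.
      assert (Gt := Gpos t ltac:(lra)).
      assert (0 < / ((1 - F t) * (1 - F t))) by (apply Rinv_0_lt_compat; nra).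
      pose proof (Hfpos t). nra. }
    pose proof (F_diff F f Hp HC x x') as HI.
    apply (is_RInt_ext f (fun _ => 0)) in HI.
    2:{ intros t Ht. rewrite Rmin_left in Ht by lra. rewrite Rmax_right in Ht by lra. apply Z; lra. }
    apply (is_RInt_unique (V:=R_CompleteNormedModule)) in HI.
    pose proof (is_RInt_unique (V:=R_CompleteNormedModule) _ _ _ _ (is_RInt_const (V:=R_CompleteNormedModule) x x' 0)) as HC0.
    rewrite HI in HC0. change (scal (x' - x) 0) with ((x' - x) * 0) in HC0. lra.
Qed.
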